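(* Let $\alpha>2$ and consider the equation in the unknown $\Lambda>0$ \[ \int_0^\infty\frac{1-\Lambda x^{2/\alpha}}{1+x}\,e^{-2\Lambda x^{2/\alpha}}\,dx=0 . \] If $\alpha\le4$ this equation has no solution $\Lambda>0$, and if $\alpha>4$ it has exactly one solution $\Lambda>0$.
   Context: The solution for $\alpha>4$ is denoted $\Lambda''(\alpha)$ in the paper. *)

(* Defs.v *)
From Stdlib Require Import Reals.
From Coquelicot Require Import Coquelicot.
Open Scope R_scope.

(* Real power x^a for x > 0, extended by 0 at x <= 0 (only x = 0 matters,
   a single point, irrelevant for the integral). *)
Definition rpow (x a : R) : R :=
  if Rlt_dec 0 x then Rpower x a else 0.

Definition integrand (alpha L x : R) : R :=
  (1 - L * rpow x (2 / alpha)) / (1 + x) * exp (- (2 * L * rpow x (2 / alpha))).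

Definition solves (alpha L : R) : Prop :=
  is_RInt_gen (integrand alpha L) (at_point 0) (Rbar_locally p_infty) 0.

(* Main.v *)
Require Import Defs.
From Stdlib Require Import Reals.
From Coquelicot Require Import Coquelicot.
From Stdlib Require Import Lra Lia Psatz.
Open Scope R_scope.


Lemma rpow_nonpos x b : x <= 0 -> rpow x b = 0.
Proof. intros H; unfold rpow; destruct (Rlt_dec 0 x); [lra|reflexivity]. Qed.

Lemma rpow_pos x b : 0 < x -> rpow x b = exp (b * ln x).
Proof. intros H; unfold rpow; destruct (Rlt_dec 0 x); [reflexivity|lra]. Qed.

Lemma rpow_ge0 x b : 0 <= rpow x b.
Proof. destruct (Rle_lt_dec x 0). rewrite rpow_nonpos; lra.
  rewrite rpow_pos; auto. left; apply exp_pos. Qed.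

Lemma rpow_gt0 x b : 0 < x -> 0 < rpow x b.
Proof. intros; rewrite rpow_pos; auto; apply exp_pos. Qed.

Lemma rpow_lt x y b : 0 < b -> 0 <= x < y -> rpow x b < rpow y b.
Proof. intros Hb [H0 H1]. destruct H0 as [H0|H0].
  rewrite !rpow_pos; try lra. apply exp_increasing.
  apply Rmult_lt_compat_l; auto. apply ln_increasing; lra.
  subst. rewrite rpow_nonpos; try lra. apply rpow_gt0; lra. Qed.

Lemma rpow_le x y b : 0 < b -> 0 <= x <= y -> rpow x b <= rpow y b.
Proof. intros Hb [H0 H1]. destruct H1 as [H1|H1]. left; apply rpow_lt; lra. subst; lra. Qed.

Lemma rpow_1 b : rpow 1 b = 1.
Proof. rewrite rpow_pos; try lra. rewrite ln_1, Rmult_0_r, exp_0; auto. Qed.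

Lemma rpow_le1 x b : 0 < b -> 0 <= x <= 1 -> rpow x b <= 1.
Proof. intros. rewrite <- (rpow_1 b). apply rpow_le; lra. Qed.

Lemma rpow_ge1 x b : 0 < b -> 1 <= x -> 1 <= rpow x b.
Proof. intros. rewrite <- (rpow_1 b). apply rpow_le; lra. Qed.

Lemma rpow_cont0 b : 0 < b -> continuous (fun y => rpow y b) 0.
Proof. intros Hb. apply continuity_pt_filterlim.
  unfold continuity_pt, continue_in, limit1_in, limit_in. intros eps Heps.
  exists (exp (ln eps / b)). split. apply exp_pos.
  intros x [_ Hx]. simpl in *. unfold R_dist in *. rewrite (rpow_nonpos 0); try lra.
  rewrite Rminus_0_r in *. destruct (Rle_lt_dec x 0).
  rewrite rpow_nonpos; auto. rewrite Rabs_R0; auto.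
  rewrite Rabs_pos_eq in Hx; try lra. rewrite rpow_pos; auto.
  rewrite Rabs_pos_eq by (left; apply exp_pos).
  rewrite <- (exp_ln eps) by auto. apply exp_increasing.
  assert (ln x < ln eps / b). { rewrite <- (ln_exp (ln eps / b)). apply ln_increasing; lra. }
  apply Rmult_lt_reg_r with (/b). apply Rinv_0_lt_compat; auto.
  replace (b * ln x * / b) with (ln x) by (field; lra). exact H.
Qed.

Lemma rpow_derive x b : 0 < x -> is_derive (fun y => rpow y b) x (b * rpow x b / x).
Proof. intros Hx.
  apply is_derive_ext_loc with (fun y => exp (b * ln y)).
  { exists (mkposreal x Hx). intros y Hy. simpl in Hy. unfold ball in Hy; simpl in Hy.
    unfold AbsRing_ball, abs, minus, plus, opp in Hy; simpl in Hy.
    rewrite rpow_pos; auto. apply Rabs_def2 in Hy. lra. }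
  rewrite rpow_pos; auto. auto_derive. lra. field. lra.
Qed.

Lemma rpow_cont x b : 0 < b -> 0 <= x -> continuous (fun y => rpow y b) x.
Proof. intros Hb [Hx|Hx]. apply (@ex_derive_continuous R_AbsRing R_NormedModule (fun y => rpow y b)). eexists; apply rpow_derive; auto.
  subst; apply rpow_cont0; auto. Qed.

Lemma rpow_pow_ge x b n : 1 <= x -> 1 <= INR n * b -> x <= (rpow x b) ^ n.
Proof. intros Hx Hn. rewrite rpow_pos by lra. fold (Rpower x b).
  rewrite <- Rpower_pow by (apply exp_pos). rewrite Rpower_mult.
  rewrite <- (Rpower_1 x) at 1 by lra. apply Rle_Rpower; lra. Qed.


Lemma exp_le a b : a <= b -> exp a <= exp b.
Proof. intros [H|H]. left; apply exp_increasing; auto. subst; lra. Qed.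

Lemma exp_INR_mult y n : exp (INR n * y) = exp y ^ n.
Proof. induction n. simpl. rewrite Rmult_0_l, exp_0; auto.
  rewrite S_INR, Rmult_plus_distr_r, exp_plus, IHn, Rmult_1_l. simpl. ring. Qed.

Lemma exp_ge_pow y n : (0 < n)%nat -> 0 <= y -> (y / INR n) ^ n <= exp y.
Proof. intros Hn Hy. assert (0 < INR n) by (apply lt_0_INR; lia).
  replace y with (INR n * (y / INR n)) at 2 by (field; lra).
  rewrite exp_INR_mult. apply pow_incr. split.
  apply Rdiv_le_0_compat; lra.
  pose proof (exp_ineq1_le (y / INR n)). assert (0 <= y / INR n) by (apply Rdiv_le_0_compat; lra). lra. Qed.

Lemma expbound m b : 0 < m -> 0 < b ->
  exists C, 0 < C /\ forall x, 0 <= x -> exp (-(m * rpow x b)) <= C / (1 + x).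
Proof. intros Hm Hb. destruct (INR_unbounded (1/b)) as [n Hn].
  assert (Hnb : 1 <= INR n * b).
  { apply Rmult_le_reg_r with (/b). apply Rinv_0_lt_compat; auto.
    replace (INR n * b * / b) with (INR n) by (field; lra). unfold Rdiv in Hn; lra. }
  assert (Hn0 : (0 < n)%nat). { destruct n. simpl in Hnb. lra. lia. }
  assert (HnR : 0 < INR n) by (apply lt_0_INR; lia).
  set (D := (INR n / m) ^ n).
  assert (HD : 0 < D) by (apply pow_lt; apply Rdiv_lt_0_compat; lra).
  exists (2 + 2 * D). split. lra. intros x Hx.
  destruct (Rle_lt_dec x 1) as [H1|H1].
  - assert (exp (-(m * rpow x b)) <= 1).
    { rewrite <- exp_0. apply exp_le. pose proof (rpow_ge0 x b). nra. }
    apply Rle_trans with 1; auto. apply Rmult_le_reg_r with (1+x). lra.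
    unfold Rdiv. rewrite Rmult_assoc, Rinv_l by lra. nra.
  - set (p := rpow x b). assert (Hp : 1 <= p) by (apply rpow_ge1; lra).
    assert (Hxp : x <= p ^ n) by (apply rpow_pow_ge; lra).
    assert (He : (m * p / INR n) ^ n <= exp (m * p)) by (apply exp_ge_pow; auto; nra).
    assert (Heq : (m * p / INR n) ^ n = p ^ n / D).
    { assert (Hprod : (INR n / m) ^ n * (m / INR n) ^ n = 1).
      { rewrite <- Rpow_mult_distr. replace (INR n / m * (m / INR n)) with 1 by (field; lra). apply pow1. }
      replace (m * p / INR n) with (p * (m / INR n)) by (field; lra).
      rewrite Rpow_mult_distr.
      apply Rmult_eq_reg_r with D; [| lra].
      replace (p ^ n / D * D) with (p ^ n) by (field; lra).
      rewrite Rmult_assoc. unfold D. rewrite (Rmult_comm ((m / INR n) ^ n)). rewrite Hprod. ring. }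
    rewrite Heq in He. rewrite exp_Ropp.
    apply Rle_trans with (D / x).
    + assert (0 < x / D) by (apply Rdiv_lt_0_compat; lra).
      replace (D / x) with (/ (x / D)) by (field; lra).
      apply Rinv_le_contravar; auto. apply Rle_trans with (p ^ n / D); auto.
      unfold Rdiv; apply Rmult_le_compat_r; auto. left; apply Rinv_0_lt_compat; auto.
    + unfold Rdiv. apply Rmult_le_reg_r with (x * (1+x)). nra.
      replace (D * / x * (x * (1 + x))) with (D * (1+x)) by (field; lra).
      replace ((2 + 2 * D) * / (1 + x) * (x * (1 + x))) with ((2 + 2*D) * x) by (field; lra).
      nra.
Qed.


Definition cont0 (h : R -> R) := forall x, 0 <= x -> continuous h x.

Lemma exR h a c : cont0 h -> 0 <= a -> 0 <= c -> ex_RInt h a c.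
Proof. intros Hh Ha Hc. apply (@ex_RInt_continuous R_CompleteNormedModule). intros z Hz. apply Hh.
  apply Rle_trans with (Rmin a c); [|tauto]. apply Rmin_glb; auto. Qed.

Lemma RInt_lb h a c m : cont0 h -> 0 <= a <= c -> (forall x, a <= x <= c -> m <= h x) ->
  (c - a) * m <= RInt h a c.
Proof. intros Hh Hac Hm. replace ((c - a) * m) with (RInt (fun _ => m) a c).
  apply RInt_le. lra. apply (@ex_RInt_const R_CompleteNormedModule). apply exR; auto; lra.
  intros; apply Hm; lra. rewrite RInt_const. reflexivity. Qed.

Lemma RInt_ub h a c m : cont0 h -> 0 <= a <= c -> (forall x, a <= x <= c -> h x <= m) ->
  RInt h a c <= (c - a) * m.
Proof. intros Hh Hac Hm. replace ((c - a) * m) with (RInt (fun _ => m) a c).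
  apply RInt_le. lra. apply exR; auto; lra. apply (@ex_RInt_const R_CompleteNormedModule).
  intros; apply Hm; lra. rewrite RInt_const. reflexivity. Qed.

Lemma inv_sq_int a c : 0 <= a <= c -> is_RInt (fun t => / (1 + t) ^ 2) a c (/ (1 + a) - / (1 + c)).
Proof. intros H.
  replace (/ (1 + a) - / (1 + c)) with (minus ((fun t => - / (1+t)) c) ((fun t => - / (1+t)) a))
    by (unfold minus, plus, opp; simpl; ring).
  apply (@is_RInt_derive R_CompleteNormedModule (fun t => - / (1+t))).
  - intros x Hx. assert (0 <= x). { apply Rle_trans with (Rmin a c); [|tauto]. apply Rmin_glb; lra. }
    auto_derive. lra. field. lra.
  - intros x Hx. assert (0 <= x). { apply Rle_trans with (Rmin a c); [|tauto]. apply Rmin_glb; lra. }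
    apply continuous_Rinv_comp. apply (continuous_mult (fun t => 1 + t) (fun t => (1+t)^1)).
    apply (continuous_plus (fun _ => 1) (fun t => t)). apply continuous_const. apply continuous_id.
    apply (continuous_mult (fun t => 1 + t) (fun t => 1)).
    apply (continuous_plus (fun _ => 1) (fun t => t)). apply continuous_const. apply continuous_id.
    apply continuous_const. simpl. nra.
Qed.

Lemma tailbound h M : cont0 h -> (forall x, 0 <= x -> Rabs (h x) <= M / (1 + x) ^ 2) ->
  forall a c, 0 <= a <= c -> Rabs (RInt h a c) <= M * (/ (1 + a) - / (1 + c)).
Proof. intros Hh HM a c Hac.
  assert (HI : is_RInt (fun t => M / (1 + t) ^ 2) a c (M * (/ (1 + a) - / (1 + c)))).
  { exact (is_RInt_scal _ _ _ M _ (inv_sq_int a c Hac)). }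
  apply Rle_trans with (RInt (fun t => Rabs (h t)) a c).
  apply abs_RInt_le. lra. apply exR; auto; lra.
  rewrite <- (is_RInt_unique _ _ _ _ HI).
  apply RInt_le. lra.
  apply (ex_RInt_norm h). apply exR; auto; lra.
  eexists; exact HI.
  intros x Hx. apply HM; lra.
Qed.

Lemma tailbound0 h M : cont0 h -> (forall x, 0 <= x -> Rabs (h x) <= M / (1 + x) ^ 2) ->
  forall c, 0 <= c -> Rabs (RInt h 0 c) <= M.
Proof. intros Hh HM c Hc. assert (HM0 : 0 <= M).
  { specialize (HM 0 ltac:(lra)). replace ((1+0)^2) with 1 in HM by ring.
    pose proof (Rabs_pos (h 0)). unfold Rdiv in HM. rewrite Rinv_1 in HM. lra. }
  eapply Rle_trans. apply (tailbound h M Hh HM 0 c). lra.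
  replace (1+0) with 1 by ring. rewrite Rinv_1.
  assert (0 < / (1 + c)) by (apply Rinv_0_lt_compat; lra). nra. Qed.

Lemma cauchy_lim h M : cont0 h -> (forall x, 0 <= x -> Rabs (h x) <= M / (1 + x) ^ 2) ->
  exists l : R, is_lim (fun c => RInt h 0 c) p_infty l.
Proof. intros Hh HM.
  assert (HM0 : 0 <= M).
  { specialize (HM 0 ltac:(lra)). replace ((1+0)^2) with 1 in HM by ring.
    pose proof (Rabs_pos (h 0)). unfold Rdiv in HM. rewrite Rinv_1 in HM. lra. }
  assert (Hc : exists y : R_CompleteSpace, filterlim (fun c => RInt h 0 c) (Rbar_locally p_infty) (locally y)).
  { apply filterlim_locally_cauchy. intros eps.
    exists (fun c => Rmax 0 (M / eps) < c). split.
    exists (Rmax 0 (M / eps)). auto.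
    assert (Hb : forall u v, Rmax 0 (M / eps) < u -> u <= v -> Rabs (RInt h u v) < eps).
    { intros u v Hu Huv. assert (H0 : 0 <= u) by (pose proof (Rmax_l 0 (M/eps)); lra).
      eapply Rle_lt_trans. apply (tailbound h M Hh HM u v). lra.
      assert (0 < / (1 + v)) by (apply Rinv_0_lt_compat; lra).
      apply Rle_lt_trans with (M * / (1 + u)). nra.
      pose proof (Rmax_r 0 (M/eps)). pose proof (cond_pos eps).
      apply Rmult_lt_reg_r with (1 + u). lra. rewrite Rmult_assoc, Rinv_l by lra.
      assert (M / eps < u) by lra. apply Rmult_lt_reg_r with (/eps). apply Rinv_0_lt_compat; lra.
      replace (eps * (1 + u) * / eps) with (1 + u) by (field; lra). unfold Rdiv in *. lra. }
    intros u v Hu Hv. unfold ball; simpl; unfold AbsRing_ball, abs, minus, plus, opp; simpl.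
    assert (E : RInt h 0 v + - RInt h 0 u = RInt h u v).
    { rewrite <- (RInt_Chasles h 0 u v). unfold plus; simpl; ring.
      apply exR; auto; pose proof (Rmax_l 0 (M/eps)); lra. apply exR; auto; pose proof (Rmax_l 0 (M/eps)); lra. }
    rewrite E. destruct (Rle_lt_dec u v). apply Hb; auto.
    rewrite <- opp_RInt_swap. unfold opp; simpl. rewrite Rabs_Ropp. apply Hb; auto; lra.
    apply exR; auto; pose proof (Rmax_l 0 (M/eps)); lra. }
  destruct Hc as [y Hy]. exists y. exact Hy.
Qed.

Lemma lim_ge (u : R -> R) (l B k : R) : is_lim u p_infty l -> (forall c, B <= c -> k <= u c) -> k <= l.
Proof. intros Hu Hk. assert (H := is_lim_le_loc (fun _ => k) u p_infty k l).
  simpl in H. apply H. exists B. intros; apply Hk; lra. apply is_lim_const. exact Hu. Qed.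

Lemma lim_le (u : R -> R) (l B k : R) : is_lim u p_infty l -> (forall c, B <= c -> u c <= k) -> l <= k.
Proof. intros Hu Hk. assert (H := is_lim_le_loc u (fun _ => k) p_infty l k).
  simpl in H. apply H. exists B. intros; apply Hk; lra. exact Hu. apply is_lim_const. Qed.

Lemma lim_uniq (u : R -> R) (l1 l2 : R) : is_lim u p_infty l1 -> is_lim u p_infty l2 -> l1 = l2.
Proof. intros H1 H2. apply is_lim_unique in H1. apply is_lim_unique in H2.
  rewrite H1 in H2. injection H2; auto. Qed.


Definition fI be L x := (1 - L * rpow x be) / (1 + x) * exp (- (2 * L * rpow x be)).
Definition K be L x := x / (1 + x) * exp (- (2 * L * rpow x be)).
Definition w be x := 2 * be * x + 2 * be - 1.
Definition g be L x := exp (- (2 * L * rpow x be)) * w be x / (1 + x) ^ 2.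

Lemma cmult (f h : R -> R) x : continuous f x -> continuous h x -> continuous (fun y => f y * h y) x.
Proof. exact (continuous_mult f h x). Qed.
Lemma cplus (f h : R -> R) x : continuous f x -> continuous h x -> continuous (fun y => f y + h y) x.
Proof. exact (continuous_plus f h x). Qed.
Lemma copp (f : R -> R) x : continuous f x -> continuous (fun y => - f y) x.
Proof. exact (continuous_opp f x). Qed.
Lemma cinv (f : R -> R) x : continuous f x -> f x <> 0 -> continuous (fun y => / f y) x.
Proof. exact (continuous_Rinv_comp f x). Qed.
Lemma cexp (f : R -> R) x : continuous f x -> continuous (fun y => exp (f y)) x.
Proof. exact (continuous_exp_comp f x). Qed.
Lemma cid x : continuous (fun y : R => y) x.
Proof. exact (continuous_id x). Qed.
Lemma cconst (c : R) x : continuous (fun _ : R => c) x.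
Proof. exact (continuous_const c x). Qed.

Lemma cpow (f : R -> R) n x : continuous f x -> continuous (fun y => f y ^ n) x.
Proof. intros H. induction n. simpl. apply cconst. simpl. apply cmult; auto. Qed.

Ltac cstep := match goal with
 | |- continuous (fun y => _ ^ _) _ => apply cpow
 | |- continuous (fun y => rpow y _) _ => apply rpow_cont
 | |- continuous (fun _ => ?c) _ => apply (cconst c)
 | |- continuous (fun y => y) _ => apply cid
 | |- continuous (fun y => exp _) _ => apply cexp
 | |- continuous (fun y => / _) _ => apply cinv
 | |- continuous (fun y => _ * _) _ => apply cmult
 | |- continuous (fun y => _ + _) _ => apply cplus
 | |- continuous (fun y => - _) _ => apply copp
 | |- continuous (Rplus ?c) _ => apply (cplus (fun _ => c) (fun y => y))
 | |- continuous (Rmult ?c) _ => apply (cmult (fun _ => c) (fun y => y))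
 end.
Ltac cont_tac := repeat cstep.
Ltac cont_fin := cont_tac; try lra.

Lemma cont_fI be L : 0 < be -> cont0 (fI be L).
Proof. intros Hb x Hx. unfold fI, Rdiv, Rminus. cont_fin. Qed.

Lemma cont_g be L : 0 < be -> cont0 (g be L).
Proof. intros Hb x Hx. unfold g, w, Rdiv, Rminus. cont_fin. apply pow_nonzero; lra. Qed.

Lemma derive_K be L x : 0 < x -> is_derive (K be L) x (2 * be * fI be L x - g be L x).
Proof. intros Hx.
  apply is_derive_ext_loc with (fun y => y / (1 + y) * exp (- (2 * L * exp (be * ln y)))).
  { exists (mkposreal x Hx). intros y Hy. unfold ball in Hy; simpl in Hy.
    unfold AbsRing_ball, abs, minus, plus, opp in Hy; simpl in Hy.
    apply Rabs_def2 in Hy. unfold K. rewrite rpow_pos; auto. lra. }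
  unfold fI, g, w. rewrite rpow_pos by auto. auto_derive. lra.
  set (E := exp (- (2 * L * exp (be * ln x)))). set (Q := exp (be * ln x)).
  field. lra.
Qed.

Lemma bound_fI be L x : 0 < be -> 0 <= L -> 0 <= x <= 1 -> Rabs (fI be L x) <= 1 + L.
Proof. intros Hb HL Hx. unfold fI. pose proof (rpow_ge0 x be). pose proof (rpow_le1 x be Hb Hx).
  set (P := rpow x be) in *. set (E := exp (- (2 * L * P))).
  assert (HE : 0 < E <= 1). { split. apply exp_pos. unfold E. rewrite <- exp_0. apply exp_le. nra. }
  rewrite Rabs_mult, Rabs_div by lra. rewrite (Rabs_pos_eq (1+x)) by lra. rewrite (Rabs_pos_eq E) by lra.
  assert (Rabs (1 - L * P) <= 1 + L). { apply Rabs_le. nra. }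
  assert (0 <= Rabs (1 - L * P) / (1 + x) <= 1 + L).
  { split. apply Rdiv_le_0_compat. apply Rabs_pos. lra.
    apply Rle_trans with (Rabs (1 - L*P)); auto. unfold Rdiv.
    pose proof (Rabs_pos (1 - L*P)). assert (/ (1+x) <= 1). { rewrite <- Rinv_1. apply Rinv_le_contravar; lra. }
    assert (0 < / (1+x)) by (apply Rinv_0_lt_compat; lra). nra. }
  nra.
Qed.

Lemma bound_g be L x : 0 < be < 1 -> 0 <= L -> 0 <= x <= 1 -> Rabs (g be L x) <= 3.
Proof. intros Hb HL Hx. unfold g, w. pose proof (rpow_ge0 x be).
  set (P := rpow x be) in *. set (E := exp (- (2 * L * P))).
  assert (HE : 0 < E <= 1). { split. apply exp_pos. unfold E. rewrite <- exp_0. apply exp_le. nra. }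
  assert (H1 : 1 <= (1 + x) ^ 2) by nra.
  unfold Rdiv. rewrite Rabs_mult, Rabs_mult. rewrite (Rabs_pos_eq E) by lra.
  rewrite (Rabs_pos_eq (/ _)) by (left; apply Rinv_0_lt_compat; lra).
  assert (Rabs (2 * be * x + 2 * be - 1) <= 3) by (apply Rabs_le; nra).
  assert (/ (1+x)^2 <= 1). { rewrite <- Rinv_1. apply Rinv_le_contravar; lra. }
  assert (0 < / (1+x)^2) by (apply Rinv_0_lt_compat; lra).
  pose proof (Rabs_pos (2 * be * x + 2 * be - 1)). 
  apply Rle_trans with (3 * 1); [| lra]. apply Rmult_le_compat; try lra. apply Rmult_le_pos; lra. nra.
Qed.

Lemma K_small be L e : 0 <= L -> 0 <= e -> Rabs (K be L e) <= e.
Proof. intros HL He. unfold K. pose proof (rpow_ge0 e be).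
  set (E := exp (- (2 * L * rpow e be))).
  assert (HE : 0 < E <= 1). { split. apply exp_pos. unfold E. rewrite <- exp_0. apply exp_le. nra. }
  rewrite Rabs_pos_eq. 2: { apply Rmult_le_pos; try lra. apply Rdiv_le_0_compat; lra. }
  assert (e / (1 + e) <= e). { apply Rmult_le_reg_r with (1+e). lra. unfold Rdiv. rewrite Rmult_assoc, Rinv_l by lra. nra. }
  assert (0 <= e / (1+e)) by (apply Rdiv_le_0_compat; lra). nra.
Qed.

Lemma zero_of_small d M c : 0 < c -> 0 <= M -> (forall e, 0 < e <= c -> Rabs d <= e * M) -> d = 0.
Proof. intros Hc HM H. destruct (Req_dec d 0) as [|Hd]; auto. exfalso.
  assert (Ha : 0 < Rabs d) by (apply Rabs_pos_lt; auto).
  set (e := Rmin c (Rabs d / (2 * (M + 1)))).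
  assert (He : 0 < e). { apply Rmin_glb_lt; auto. apply Rdiv_lt_0_compat; lra. }
  specialize (H e (conj He (Rmin_l _ _))).
  assert (e <= Rabs d / (2 * (M+1))) by apply Rmin_r.
  assert (e * (2 * (M+1)) <= Rabs d). { apply Rmult_le_reg_r with (/ (2 * (M+1))). apply Rinv_0_lt_compat; lra.
    replace (e * (2 * (M + 1)) * / (2 * (M + 1))) with e by (field; lra). exact H0. }
  nra.
Qed.

Lemma ident be L c : 0 < be < 1 -> 0 <= L -> 0 <= c ->
  RInt (fI be L) 0 c = / (2 * be) * (K be L c + RInt (g be L) 0 c).
Proof. intros Hb HL Hc.
  set (h := fun x => 2 * be * fI be L x - g be L x).
  assert (Hh : cont0 h). { intros x Hx. unfold h, Rminus. apply cplus. apply cmult. apply cconst.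
    apply cont_fI; lra. apply copp. apply cont_g; lra. }
  assert (HhK : RInt h 0 c = K be L c).
  { destruct Hc as [Hc|Hc].
    2: { subst. rewrite RInt_point. unfold K. unfold zero; simpl. unfold Rdiv. ring. }
    apply Rminus_diag_uniq. apply zero_of_small with (c := Rmin c 1) (M := 2 * (1 + L) + 3 + 1).
    apply Rmin_glb_lt; lra. lra.
    intros e [He1 He2]. assert (e <= c) by (eapply Rle_trans; [exact He2| apply Rmin_l]).
    assert (e <= 1) by (eapply Rle_trans; [exact He2| apply Rmin_r]).
    rewrite <- (RInt_Chasles h 0 e c) by (apply exR; auto; lra).
    assert (HD : is_RInt h e c (minus (K be L c) (K be L e))).
    { apply (@is_RInt_derive R_CompleteNormedModule (K be L) h).
      intros x Hx. assert (e <= x) by (eapply Rle_trans; [| exact (proj1 Hx)]; apply Rmin_glb; lra).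
      apply derive_K; lra.
      intros x Hx. assert (e <= x) by (eapply Rle_trans; [| exact (proj1 Hx)]; apply Rmin_glb; lra).
      apply Hh; lra. }
    assert (E : RInt h e c = K be L c - K be L e) by (rewrite (is_RInt_unique _ _ _ _ HD); reflexivity).
    change (plus (RInt h 0 e) (RInt h e c)) with (RInt h 0 e + RInt h e c).
    rewrite E.
    replace (RInt h 0 e + (K be L c - K be L e) - K be L c) with (RInt h 0 e + - K be L e) by ring.
    eapply Rle_trans; [apply Rabs_triang|]. rewrite Rabs_Ropp.
    assert (Rabs (RInt h 0 e) <= (e - 0) * (2 * (1 + L) + 3)).
    { apply abs_RInt_le_const. lra. apply exR; auto; lra.
      intros t Ht. unfold h. unfold Rminus. eapply Rle_trans; [apply Rabs_triang|]. rewrite Rabs_Ropp.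
      rewrite Rabs_mult. rewrite (Rabs_pos_eq (2 * be)) by lra.
      pose proof (bound_fI be L t ltac:(lra) HL ltac:(lra)).
      pose proof (bound_g be L t Hb HL ltac:(lra)).
      pose proof (Rabs_pos (fI be L t)). nra. }
    pose proof (K_small be L e HL ltac:(lra)). nra. }
  set (iv := / (2 * be)).
  replace (iv * (K be L c + RInt (g be L) 0 c)) with (scal iv (plus (RInt h 0 c) (RInt (g be L) 0 c)))
    by (rewrite HhK; reflexivity).
  rewrite <- RInt_plus by (apply exR; auto; try lra; apply cont_g; lra).
  rewrite <- RInt_scal.
  2: { apply (ex_RInt_plus h (g be L)); apply exR; auto; try lra; apply cont_g; lra. }
  apply RInt_ext. intros x _. unfold scal, plus; simpl. unfold mult; simpl. unfold h, iv. field. lra.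
Qed.



Lemma w_abs be x : 0 < be < 1 -> 0 <= x -> Rabs (w be x) <= 3 * (1 + x).
Proof. intros. unfold w. apply Rabs_le. nra. Qed.

Lemma g_bound be L : 0 < be < 1 -> 0 < L ->
  exists M, forall x, 0 <= x -> Rabs (g be L x) <= M / (1 + x) ^ 2.
Proof. intros Hb HL. destruct (expbound (2 * L) be) as [C [HC HCb]]; try lra.
  exists (3 * C). intros x Hx. specialize (HCb x Hx). pose proof (w_abs be x Hb Hx).
  unfold g. set (E := exp (- (2 * L * rpow x be))) in *.
  assert (0 < E) by apply exp_pos.
  unfold Rdiv. rewrite !Rabs_mult. rewrite (Rabs_pos_eq E) by lra.
  rewrite (Rabs_pos_eq (/ _)) by (left; apply Rinv_0_lt_compat; nra).
  assert (E * (1 + x) <= C). { unfold Rdiv in HCb. apply Rmult_le_reg_r with (/ (1+x)).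
    apply Rinv_0_lt_compat; lra. rewrite Rmult_assoc, Rinv_r, Rmult_1_r by lra. exact HCb. }
  assert (0 < / (1 + x) ^ 2) by (apply Rinv_0_lt_compat; nra).
  apply Rmult_le_compat_r. lra. pose proof (Rabs_pos (w be x)). nra.
Qed.

Lemma exp_diff a d : 0 <= d -> 0 <= exp (- a) - exp (- (a + d)) <= d * exp (- a).
Proof. intros Hd. replace (- (a + d)) with (- a + - d) by ring. rewrite exp_plus.
  pose proof (exp_pos (-a)). pose proof (exp_ineq1_le (- d)).
  assert (exp (- d) <= 1). { rewrite <- exp_0. apply exp_le. lra. }
  split; nra.
Qed.

Lemma g_lip be m : 0 < be < 1 -> 0 < m ->
  exists M, forall L1 L2 x, m <= L1 <= L2 -> 0 <= x ->
    Rabs (g be L1 x - g be L2 x) <= (L2 - L1) * M / (1 + x) ^ 2.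
Proof. intros Hb Hm. destruct (expbound m be) as [C [HC HCb]]; try lra.
  exists (6 * C / m). intros L1 L2 x HL Hx. specialize (HCb x Hx). pose proof (w_abs be x Hb Hx).
  pose proof (rpow_ge0 x be). set (P := rpow x be) in *.
  assert (Hd := exp_diff (2 * L1 * P) (2 * (L2 - L1) * P) ltac:(nra)).
  replace (2 * L1 * P + 2 * (L2 - L1) * P) with (2 * L2 * P) in Hd by ring.
  set (E1 := exp (- (2 * L1 * P))) in *. set (E2 := exp (- (2 * L2 * P))) in *.
  assert (HPE : P * E1 <= / m * (C / (1 + x))).
  { assert (E1 <= exp (- (m * P)) * exp (- (m * P))).
    { unfold E1. rewrite <- exp_plus. apply exp_le. nra. }
    assert (P * exp (- (m * P)) <= / m).
    { rewrite exp_Ropp. pose proof (exp_ineq1_le (m * P)). pose proof (exp_pos (m * P)).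
      apply Rmult_le_reg_r with (exp (m * P) * m). nra.
      replace (P * / exp (m * P) * (exp (m * P) * m)) with (P * m) by (field; lra).
      replace (/ m * (exp (m * P) * m)) with (exp (m * P)) by (field; lra). nra. }
    pose proof (exp_pos (- (m * P))).
    apply Rle_trans with (P * (exp (- (m * P)) * exp (- (m * P)))). nra.
    rewrite <- Rmult_assoc. apply Rmult_le_compat; try nra. }
  unfold g. fold P. fold E1 E2.
  replace (E1 * w be x / (1 + x) ^ 2 - E2 * w be x / (1 + x) ^ 2) with ((E1 - E2) * w be x / (1 + x) ^ 2)
    by (field; nra).
  unfold Rdiv. rewrite !Rabs_mult. rewrite (Rabs_pos_eq (E1 - E2)) by lra.
  rewrite (Rabs_pos_eq (/ _)) by (left; apply Rinv_0_lt_compat; nra).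
  apply Rmult_le_compat_r. left; apply Rinv_0_lt_compat; nra.
  apply Rle_trans with ((2 * (L2 - L1) * P * E1) * (3 * (1 + x))).
  apply Rmult_le_compat; try lra. apply Rabs_pos.
  apply Rle_trans with (2 * (L2 - L1) * (/ m * (C / (1 + x))) * (3 * (1 + x))).
  apply Rmult_le_compat_r. lra. rewrite Rmult_assoc. apply Rmult_le_compat_l; lra.
  right. field. split; lra.
Qed.

Definition G be L := real (Lim (fun c => RInt (g be L) 0 c) p_infty).

Lemma G_lim be L : 0 < be < 1 -> 0 < L -> is_lim (fun c => RInt (g be L) 0 c) p_infty (G be L).
Proof. intros Hb HL. destruct (g_bound be L Hb HL) as [M HM].
  destruct (cauchy_lim (g be L) M (cont_g be L ltac:(lra)) HM) as [l Hl].
  unfold G. rewrite (is_lim_unique _ _ _ Hl). simpl. exact Hl. Qed.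

Lemma lim0_bound (u : R -> R) B C : 0 < C -> (forall c, B <= c -> Rabs (u c) <= C / (1 + c)) ->
  is_lim u p_infty 0.
Proof. intros HC Hu P [eps HP]. simpl. exists (Rmax (Rmax B 0) (C / eps)). intros c Hc.
  apply HP. unfold ball; simpl; unfold AbsRing_ball, abs, minus, plus, opp; simpl.
  rewrite Ropp_0, Rplus_0_r. pose proof (Rmax_l (Rmax B 0) (C/eps)). pose proof (Rmax_r (Rmax B 0) (C/eps)).
  pose proof (Rmax_l B 0). pose proof (Rmax_r B 0). pose proof (cond_pos eps).
  eapply Rle_lt_trans. apply Hu. lra.
  apply Rmult_lt_reg_r with (1 + c). lra. unfold Rdiv. rewrite Rmult_assoc, Rinv_l by lra.
  assert (C / eps < c) by lra. apply Rmult_lt_reg_r with (/ eps). apply Rinv_0_lt_compat; lra.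
  replace (eps * (1 + c) * / eps) with (1 + c) by (field; lra). unfold Rdiv in *. lra.
Qed.

Lemma K_lim be L : 0 < be -> 0 < L -> is_lim (K be L) p_infty 0.
Proof. intros Hb HL. destruct (expbound (2 * L) be) as [C [HC HCb]]; try lra.
  apply lim0_bound with 0 C; auto. intros c Hc. unfold K.
  specialize (HCb c Hc). pose proof (exp_pos (- (2 * L * rpow c be))).
  rewrite Rabs_pos_eq. 2: { apply Rmult_le_pos. apply Rdiv_le_0_compat; lra. lra. }
  assert (c / (1 + c) <= 1). { apply Rmult_le_reg_r with (1+c). lra. unfold Rdiv. rewrite Rmult_assoc, Rinv_l by lra. lra. }
  assert (0 <= c / (1+c)) by (apply Rdiv_le_0_compat; lra). nra.
Qed.


Lemma solves_lim alpha L : solves alpha L -> is_lim (fun c => RInt (fI (2 / alpha) L) 0 c) p_infty 0.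
Proof. intros Hs P HP. specialize (Hs P HP). unfold filtermapi in Hs.
  destruct Hs as [Q R HQ HR Hqr]. destruct HR as [M HM]. exists M. intros c Hc.
  destruct (Hqr 0 c HQ (HM c Hc)) as [y [Hy Py]]. simpl in Hy.
  change (fI (2 / alpha) L) with (integrand alpha L). rewrite (is_RInt_unique _ _ _ _ Hy). exact Py.
Qed.

Lemma lim_solves alpha L : 0 < 2 / alpha -> is_lim (fun c => RInt (fI (2 / alpha) L) 0 c) p_infty 0 -> solves alpha L.
Proof. intros Hb Hl P HP. specialize (Hl P HP). destruct Hl as [M HM].
  unfold filtermapi. apply (Filter_prod _ _ _ (fun a => a = 0) (fun c => Rmax M 0 < c)).
  reflexivity. exists (Rmax M 0). auto.
  intros x y Hx Hy. subst x. exists (RInt (fI (2 / alpha) L) 0 y). split.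
  simpl. apply (@RInt_correct R_CompleteNormedModule). apply exR. apply cont_fI; auto. lra. pose proof (Rmax_r M 0); lra.
  apply HM. pose proof (Rmax_l M 0); lra.
Qed.

Lemma solves_iff alpha L : 2 < alpha -> 0 < L -> (solves alpha L <-> G (2 / alpha) L = 0).
Proof. intros Ha HL. set (be := 2 / alpha).
  assert (Hb : 0 < be < 1). { unfold be. split. apply Rdiv_lt_0_compat; lra.
    apply Rmult_lt_reg_r with alpha. lra. unfold Rdiv. rewrite Rmult_assoc, Rinv_l; lra. }
  split.
  - intros Hs. apply solves_lim in Hs. fold be in Hs.
    assert (H2 := is_lim_minus' _ _ _ _ _ (is_lim_scal_l _ (2 * be) _ _ Hs) (K_lim be L ltac:(lra) HL)).
    simpl in H2.
    assert (H3 : is_lim (fun c => RInt (g be L) 0 c) p_infty (2 * be * 0 - 0)).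
    { eapply is_lim_ext_loc; [| exact H2]. exists 0. intros c Hc. simpl.
      rewrite (ident be L c Hb ltac:(lra) ltac:(lra)). field. lra. }
    rewrite (lim_uniq _ _ _ (G_lim be L Hb HL) H3). ring.
  - intros HG. apply lim_solves. fold be; lra. fold be.
    assert (H1 := is_lim_scal_l _ (/ (2 * be)) _ _
      (is_lim_plus' _ _ _ _ _ (K_lim be L ltac:(lra) HL) (G_lim be L Hb HL))).
    rewrite HG in H1. simpl in H1. replace (/ (2 * be) * (0 + 0)) with 0 in H1 by ring.
    eapply is_lim_ext_loc; [| exact H1]. exists 0. intros c Hc. simpl.
    rewrite (ident be L c Hb ltac:(lra) ltac:(lra)). reflexivity.
Qed.


Lemma split3 h a b c : cont0 h -> 0 <= a -> 0 <= b -> 0 <= c -> RInt h a c = RInt h a b + RInt h b c.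
Proof. intros Hh Ha Hb Hc. rewrite <- (RInt_Chasles h a b c); try (apply exR; auto). reflexivity. Qed.

Lemma E_bounds L x be : 0 <= L -> 0 < exp (- (2 * L * rpow x be)) <= 1.
Proof. intros HL. split. apply exp_pos. rewrite <- exp_0. apply exp_le. pose proof (rpow_ge0 x be). nra. Qed.

Lemma G_pos be L : 1/2 <= be < 1 -> 0 < L -> 0 < G be L.
Proof. intros Hb HL. assert (Hb' : 0 < be < 1) by lra.
  assert (Hg := cont_g be L ltac:(lra)).
  assert (Hpos : forall x, 0 <= x -> 0 <= g be L x).
  { intros x Hx. unfold g, w. pose proof (E_bounds L x be ltac:(lra)).
    apply Rdiv_le_0_compat. apply Rmult_le_pos; nra. nra. }
  set (m0 := exp (- (2 * L)) / 8).
  assert (Hm0 : 0 < m0) by (unfold m0; apply Rdiv_lt_0_compat; [apply exp_pos|lra]).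
  assert (Hmid : forall x, 1/2 <= x <= 1 -> m0 <= g be L x).
  { intros x Hx. unfold g, w, m0. pose proof (rpow_le1 x be ltac:(lra) ltac:(lra)).
    pose proof (rpow_ge0 x be).
    assert (exp (- (2 * L)) <= exp (- (2 * L * rpow x be))) by (apply exp_le; nra).
    pose proof (exp_pos (- (2 * L))).
    apply Rmult_le_reg_r with ((1 + x) ^ 2). nra.
    replace (exp (- (2 * L * rpow x be)) * (2 * be * x + 2 * be - 1) / (1 + x) ^ 2 * (1 + x) ^ 2)
      with (exp (- (2 * L * rpow x be)) * (2 * be * x + 2 * be - 1)) by (field; nra).
    assert (1/2 <= 2 * be * x + 2 * be - 1) by nra.
    assert (exp (- (2 * L)) / 8 * (1 + x) ^ 2 <= exp (- (2 * L)) * (1/2)).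
    { unfold Rdiv. assert ((1+x)^2 <= 4) by nra. nra. }
    nra. }
  apply Rlt_le_trans with ((1 - 1/2) * m0). nra.
  apply lim_ge with (u := fun c => RInt (g be L) 0 c) (B := 1). apply G_lim; auto.
  intros c Hc. rewrite (split3 _ 0 (1/2) c); auto; try lra. rewrite (split3 _ (1/2) 1 c); auto; try lra.
  assert ((1/2 - 0) * 0 <= RInt (g be L) 0 (1/2)) by (apply RInt_lb; auto; intros; try lra; apply Hpos; lra).
  assert ((c - 1) * 0 <= RInt (g be L) 1 c) by (apply RInt_lb; auto; intros; try lra; apply Hpos; lra).
  assert ((1 - 1/2) * m0 <= RInt (g be L) (1/2) 1) by (apply RInt_lb; auto; lra).
  lra.
Qed.


Definition x0 be := (1 - 2 * be) / (2 * be).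

Lemma x0_pos be : 0 < be < 1/2 -> 0 < x0 be.
Proof. intros. unfold x0. apply Rdiv_lt_0_compat; lra. Qed.

Lemma w_x0 be x : 0 < be -> w be x = 2 * be * (x - x0 be).
Proof. intros. unfold w, x0. field. lra. Qed.

Lemma g_shift be L c0 x : exp (2 * L * c0) * g be L x =
  exp (- (2 * L * (rpow x be - c0))) * (w be x / (1 + x) ^ 2).
Proof. unfold g. replace (- (2 * L * (rpow x be - c0))) with (2 * L * c0 + - (2 * L * rpow x be)) by ring.
  rewrite exp_plus. unfold Rdiv. ring. Qed.

Lemma scal_minus_lim be L1 L2 k1 k2 : 0 < be < 1 -> 0 < L1 -> 0 < L2 ->
  is_lim (fun c => RInt (fun x => k1 * g be L1 x - k2 * g be L2 x) 0 c) p_infty (k1 * G be L1 - k2 * G be L2).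
Proof. intros Hb H1 H2.
  assert (H := is_lim_minus' _ _ _ _ _ (is_lim_scal_l _ k1 _ _ (G_lim be L1 Hb H1))
     (is_lim_scal_l _ k2 _ _ (G_lim be L2 Hb H2))). simpl in H.
  eapply is_lim_ext_loc; [| exact H]. exists 0. intros c Hc. simpl.
  assert (E1 : ex_RInt (g be L1) 0 c) by (apply exR; try lra; apply cont_g; lra).
  assert (E2 : ex_RInt (g be L2) 0 c) by (apply exR; try lra; apply cont_g; lra).
  change (k1 * RInt (g be L1) 0 c - k2 * RInt (g be L2) 0 c) with
    (minus (scal k1 (RInt (g be L1) 0 c)) (scal k2 (RInt (g be L2) 0 c))).
  rewrite <- !RInt_scal by auto. rewrite <- (@RInt_minus R_CompleteNormedModule).
  apply RInt_ext. intros; reflexivity.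
  apply (ex_RInt_scal (g be L1)); auto. apply (ex_RInt_scal (g be L2)); auto.
Qed.

Lemma G_strict be L1 L2 : 0 < be < 1/2 -> 0 < L1 < L2 -> G be L1 = 0 -> G be L2 = 0 -> False.
Proof. intros Hb HL HG1 HG2. assert (Hb' : 0 < be < 1) by lra.
  pose proof (x0_pos be Hb) as Hx0. set (X := x0 be) in *.
  set (c0 := rpow X be). set (p1 := rpow (X / 2) be).
  assert (Hp1 : p1 < c0) by (apply rpow_lt; lra).
  pose proof (rpow_ge0 (X/2) be).
  set (k1 := exp (2 * L1 * c0)). set (k2 := exp (2 * L2 * c0)).
  set (d := fun x => k1 * g be L1 x - k2 * g be L2 x).
  assert (Hd : cont0 d). { intros x Hx. unfold d, Rminus. apply cplus. apply cmult. apply cconst.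
    apply cont_g; lra. apply copp. apply cmult. apply cconst. apply cont_g; lra. }
  assert (Hde : forall x, d x = (exp (- (2 * L1 * (rpow x be - c0))) - exp (- (2 * L2 * (rpow x be - c0))))
     * (w be x / (1 + x) ^ 2)).
  { intros x. unfold d, k1, k2. rewrite !g_shift. ring. }
  assert (Hnn : forall x, 0 <= x -> 0 <= d x).
  { intros x Hx. rewrite Hde. rewrite w_x0 by lra. fold X.
    assert (0 < (1 + x) ^ 2) by nra.
    destruct (Rle_lt_dec X x) as [Hxx|Hxx].
    - assert (c0 <= rpow x be) by (apply rpow_le; lra).
      assert (exp (- (2 * L2 * (rpow x be - c0))) <= exp (- (2 * L1 * (rpow x be - c0)))) by (apply exp_le; nra).
      apply Rmult_le_pos. lra. apply Rdiv_le_0_compat; nra.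
    - assert (rpow x be <= c0) by (apply rpow_le; lra).
      assert (exp (- (2 * L1 * (rpow x be - c0))) <= exp (- (2 * L2 * (rpow x be - c0)))) by (apply exp_le; nra).
      assert (2 * be * (x - X) / (1 + x) ^ 2 <= 0).
      { unfold Rdiv. assert (0 < / (1+x)^2) by (apply Rinv_0_lt_compat; nra). assert (2 * be * (x - X) <= 0) by nra. nra. }
      nra. }
  set (q := exp (2 * (L2 - L1) * (c0 - p1)) - 1).
  assert (Hq : 0 < q). { unfold q. pose proof (exp_ineq1_le (2 * (L2 - L1) * (c0 - p1))). nra. }
  set (delta := q * (be * X / (1 + X) ^ 2)).
  assert (Hdelta : 0 < delta). { unfold delta. apply Rmult_lt_0_compat; auto.
    apply Rdiv_lt_0_compat; nra. }
  assert (Hlow : forall x, 0 <= x <= X / 2 -> delta <= d x).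
  { intros x Hx. rewrite Hde. rewrite w_x0 by lra. fold X.
    assert (rpow x be <= p1) by (apply rpow_le; lra).
    set (t := c0 - rpow x be). assert (Ht : c0 - p1 <= t) by (unfold t; lra).
    replace (- (2 * L1 * (rpow x be - c0))) with (2 * L1 * t) by (unfold t; ring).
    replace (- (2 * L2 * (rpow x be - c0))) with (2 * L1 * t + 2 * (L2 - L1) * t) by (unfold t; ring).
    rewrite exp_plus.
    assert (H1 : 1 <= exp (2 * L1 * t)) by (rewrite <- exp_0; apply exp_le; nra).
    assert (H2 : exp (2 * (L2 - L1) * (c0 - p1)) <= exp (2 * (L2 - L1) * t)) by (apply exp_le; nra).
    assert (H3 : q <= exp (2 * L1 * t) * exp (2 * (L2 - L1) * t) - exp (2 * L1 * t)).
    { unfold q. assert (0 <= (exp (2 * L1 * t) - 1) * (exp (2 * (L2 - L1) * t) - 1)).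
      { apply Rmult_le_pos. lra. pose proof (exp_ineq1_le (2 * (L2 - L1) * (c0 - p1))). nra. }
      nra. }
    assert (H4 : be * X / (1 + X) ^ 2 <= - (2 * be * (x - X) / (1 + x) ^ 2)).
    { unfold Rdiv. assert (Hx1 : 0 < (1+x)^2) by nra. assert (Hx2 : (1+x)^2 <= (1+X)^2) by nra.
      assert (/ (1+X)^2 <= / (1+x)^2) by (apply Rinv_le_contravar; auto).
      assert (0 < / (1+X)^2) by (apply Rinv_0_lt_compat; nra).
      assert (Hq1 : be * X <= 2 * be * (X - x)) by nra.
      assert (0 <= be * X) by nra.
      assert (be * X * / (1 + X) ^ 2 <= be * X * / (1 + x) ^ 2) by (apply Rmult_le_compat_l; lra).
      assert (be * X * / (1 + x) ^ 2 <= 2 * be * (X - x) * / (1 + x) ^ 2) by (apply Rmult_le_compat_r; lra).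
      replace (- (2 * be * (x - X) * / (1 + x) ^ 2)) with (2 * be * (X - x) * / (1 + x) ^ 2) by ring.
      lra. }
    unfold delta.
    replace ((exp (2 * L1 * t) - exp (2 * L1 * t) * exp (2 * (L2 - L1) * t)) * (2 * be * (x - X) / (1 + x) ^ 2))
      with ((exp (2 * L1 * t) * exp (2 * (L2 - L1) * t) - exp (2 * L1 * t)) * - (2 * be * (x - X) / (1 + x) ^ 2)) by ring.
    apply Rmult_le_compat; try lra. apply Rdiv_le_0_compat; nra. }
  assert (Hlim := scal_minus_lim be L1 L2 k1 k2 Hb' ltac:(lra) ltac:(lra)).
  rewrite HG1, HG2 in Hlim. replace (k1 * 0 - k2 * 0) with 0 in Hlim by ring.
  assert (Hge : (X / 2 - 0) * delta <= 0).
  { apply lim_ge with (u := fun c => RInt d 0 c) (B := X / 2). exact Hlim.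
    intros c Hc. rewrite (split3 d 0 (X/2) c); auto; try lra.
    assert ((X / 2 - 0) * delta <= RInt d 0 (X/2)) by (apply RInt_lb; auto; lra).
    assert ((c - X / 2) * 0 <= RInt d (X/2) c) by (apply RInt_lb; auto; try lra; intros; apply Hnn; lra).
    lra. }
  nra.
Qed.


Lemma G_lip be m : 0 < be < 1 -> 0 < m ->
  exists K, forall L1 L2, m <= L1 <= L2 -> Rabs (G be L1 - G be L2) <= K * (L2 - L1).
Proof. intros Hb Hm. destruct (g_lip be m Hb Hm) as [M HM]. exists M. intros L1 L2 HL.
  assert (Hlim := scal_minus_lim be L1 L2 1 1 Hb ltac:(lra) ltac:(lra)).
  set (h := fun x => 1 * g be L1 x - 1 * g be L2 x) in Hlim.
  assert (Hh : cont0 h). { intros x Hx. unfold h, Rminus. apply cplus. apply cmult. apply cconst.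
    apply cont_g; lra. apply copp. apply cmult. apply cconst. apply cont_g; lra. }
  assert (Hb2 : forall x, 0 <= x -> Rabs (h x) <= (L2 - L1) * M / (1 + x) ^ 2).
  { intros x Hx. unfold h. rewrite !Rmult_1_l. apply HM; auto. }
  assert (T := tailbound0 h _ Hh Hb2).
  rewrite !Rmult_1_l in Hlim. apply Rabs_le. split.
  - replace (- (M * (L2 - L1))) with (- ((L2 - L1) * M)) by ring.
    apply lim_ge with (u := fun c => RInt h 0 c) (B := 0). exact Hlim.
    intros c Hc. specialize (T c Hc). revert T; unfold Rabs; destruct (Rcase_abs _); intros; lra.
  - replace (M * (L2 - L1)) with ((L2 - L1) * M) by ring.
    apply lim_le with (u := fun c => RInt h 0 c) (B := 0). exact Hlim.
    intros c Hc. specialize (T c Hc). revert T; unfold Rabs; destruct (Rcase_abs _); intros; lra.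
Qed.

Lemma G_contpt be a L : 0 < be < 1 -> 0 < a -> a <= L -> continuity_pt (fun L => - G be L) L.
Proof. intros Hb Ha HL. destruct (G_lip be (a / 2) Hb ltac:(lra)) as [K HK].
  unfold continuity_pt, continue_in, limit1_in, limit_in. intros eps Heps.
  exists (Rmin (a / 2) (eps / (Rabs K + 1))). split.
  apply Rmin_glb_lt. lra. apply Rdiv_lt_0_compat. lra. pose proof (Rabs_pos K); lra.
  intros y [_ Hy]. simpl in *. unfold R_dist in *.
  pose proof (Rmin_l (a / 2) (eps / (Rabs K + 1))). pose proof (Rmin_r (a / 2) (eps / (Rabs K + 1))).
  pose proof (Rabs_pos K).
  assert (Hyd : Rabs (y - L) < eps / (Rabs K + 1)) by lra.
  assert (Hya : a / 2 <= y). { apply Rabs_def2 in Hy. lra. }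
  assert (Hbd : Rabs (G be y - G be L) <= Rabs K * Rabs (y - L)).
  { destruct (Rle_lt_dec y L) as [Hyl|Hyl].
    - specialize (HK y L ltac:(lra)). rewrite (Rabs_minus_sym y L). rewrite (Rabs_pos_eq (L - y)) by lra.
      eapply Rle_trans. exact HK. apply Rmult_le_compat_r. lra. apply Rle_abs.
    - specialize (HK L y ltac:(lra)). rewrite (Rabs_pos_eq (y - L)) by lra.
      rewrite Rabs_minus_sym. eapply Rle_trans. exact HK. apply Rmult_le_compat_r. lra. apply Rle_abs. }
  replace (- G be y - - G be L) with (- (G be y - G be L)) by ring. rewrite Rabs_Ropp.
  eapply Rle_lt_trans. exact Hbd.
  apply Rle_lt_trans with (Rabs K * (eps / (Rabs K + 1))).
  apply Rmult_le_compat_l; lra.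
  apply Rmult_lt_reg_r with (Rabs K + 1). lra.
  replace (Rabs K * (eps / (Rabs K + 1)) * (Rabs K + 1)) with (Rabs K * eps) by (field; lra). nra.
Qed.


Definition u be x := w be x / (1 + x) ^ 2.

Lemma u_int be a c : 0 < be -> 0 <= a <= c ->
  is_RInt (u be) a c ((2 * be * ln (1 + c) + / (1 + c)) - (2 * be * ln (1 + a) + / (1 + a))).
Proof. intros Hb H.
  apply (@is_RInt_derive R_CompleteNormedModule (fun t => 2 * be * ln (1 + t) + / (1 + t)) (u be)).
  - intros x Hx. assert (0 <= x). { apply Rle_trans with (Rmin a c); [|tauto]. apply Rmin_glb; lra. }
    auto_derive. lra. unfold u, w. field. lra.
  - intros x Hx. assert (0 <= x). { apply Rle_trans with (Rmin a c); [|tauto]. apply Rmin_glb; lra. }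
    unfold u, w, Rdiv, Rminus. cont_fin. apply pow_nonzero; lra.
Qed.

Lemma g_eq be L x : g be L x = exp (- (2 * L * rpow x be)) * u be x.
Proof. unfold g, u, Rdiv. ring. Qed.

Lemma G_small be : 0 < be < 1/2 -> exists L, 0 < L /\ 0 < G be L.
Proof. intros Hb. pose proof (x0_pos be Hb) as HX. set (X := x0 be) in *.
  set (b1 := (1 + X) * exp ((X + 2) / be) - 1).
  assert (He1 : 1 + (X + 2) / be <= exp ((X + 2) / be)) by apply exp_ineq1_le.
  assert (Hq : 0 < (X + 2) / be) by (apply Rdiv_lt_0_compat; lra).
  assert (Hb1 : X <= b1). { unfold b1. nra. }
  set (P1 := rpow b1 be). assert (HP1 : 0 < P1) by (apply rpow_gt0; lra).
  set (L := / (4 * P1)). assert (HL : 0 < L) by (apply Rinv_0_lt_compat; lra).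
  exists L. split; auto.
  assert (Hg := cont_g be L ltac:(lra)).
  assert (Hu : cont0 (u be)). { intros x Hx. unfold u, w, Rdiv, Rminus. cont_fin. apply pow_nonzero; lra. }
  set (eL := exp (- (2 * L * P1))).
  assert (HeL : 1/2 <= eL). { unfold eL. replace (2 * L * P1) with (1/2) by (unfold L; field; lra).
    pose proof (exp_ineq1_le (- (1/2))). lra. }
  assert (HuI : 2 * X + 3 <= RInt (u be) X b1).
  { rewrite (is_RInt_unique _ _ _ _ (u_int be X b1 ltac:(lra) ltac:(lra))).
    replace (1 + b1) with ((1 + X) * exp ((X + 2) / be)) by (unfold b1; ring).
    rewrite ln_mult, ln_exp by (try apply exp_pos; lra).
    replace (2 * be * (ln (1 + X) + (X + 2) / be)) with (2 * be * ln (1 + X) + 2 * (X + 2)) by (field; lra).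
    assert (0 < / ((1 + X) * exp ((X + 2) / be))) by (apply Rinv_0_lt_compat; apply Rmult_lt_0_compat; [lra|apply exp_pos]).
    assert (/ (1 + X) <= 1) by (rewrite <- Rinv_1; apply Rinv_le_contravar; lra). lra. }
  apply Rlt_le_trans with (3/2). lra.
  apply lim_ge with (u := fun c => RInt (g be L) 0 c) (B := b1). apply G_lim; auto; lra.
  intros c Hc. rewrite (split3 _ 0 X c); auto; try lra. rewrite (split3 _ X b1 c); auto; try lra.
  assert (H1 : (X - 0) * (-1) <= RInt (g be L) 0 X).
  { apply RInt_lb; auto; try lra. intros x Hx. rewrite g_eq. pose proof (E_bounds L x be ltac:(lra)).
    unfold u. rewrite w_x0 by lra. fold X.
    assert (0 < / (1 + x) ^ 2 <= 1). { split. apply Rinv_0_lt_compat; nra. rewrite <- Rinv_1; apply Rinv_le_contravar; nra. }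
    assert (-1 <= 2 * be * (x - X) <= 0). { split. unfold X, x0. assert (2 * be * (x - (1 - 2 * be) / (2 * be)) = 2 * be * x - (1 - 2 * be)) by (field; lra). nra. nra. }
    unfold Rdiv. assert (-1 <= 2 * be * (x - X) * / (1 + x) ^ 2 <= 0) by nra. nra. }
  assert (H3 : (c - b1) * 0 <= RInt (g be L) b1 c).
  { apply RInt_lb; auto; try lra. intros x Hx. rewrite g_eq. pose proof (E_bounds L x be ltac:(lra)).
    unfold u. rewrite w_x0 by lra. fold X. apply Rmult_le_pos. lra. apply Rdiv_le_0_compat; nra. }
  assert (H2 : eL * RInt (u be) X b1 <= RInt (g be L) X b1).
  { assert (Hs : RInt (fun x => eL * u be x) X b1 = eL * RInt (u be) X b1).
    { exact (@RInt_scal R_CompleteNormedModule (u be) X b1 eL (exR _ X b1 Hu ltac:(lra) ltac:(lra))). }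
    rewrite <- Hs.
    apply RInt_le. lra. apply (ex_RInt_scal (u be)). apply exR; auto; lra. apply exR; auto; lra.
    intros x Hx. rewrite g_eq.
    assert (0 <= u be x). { unfold u. rewrite w_x0 by lra. fold X. apply Rdiv_le_0_compat; nra. }
    assert (eL <= exp (- (2 * L * rpow x be))).
    { unfold eL. apply exp_le. assert (rpow x be <= P1) by (apply rpow_le; lra). nra. }
    nra. }
  nra.
Qed.

Lemma G_large be L0 : 0 < be < 1/2 -> exists L, L0 < L /\ 1 <= L /\ G be L < 0.
Proof. intros Hb. assert (Hb' : 0 < be < 1) by lra.
  pose proof (x0_pos be Hb) as HX. set (X := x0 be) in *.
  set (c0 := rpow X be). set (p1 := rpow (X / 2) be).
  assert (Hp1 : p1 < c0) by (apply rpow_lt; lra).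
  assert (Hp0 : 0 <= p1) by apply rpow_ge0.
  set (r := c0 - p1).
  set (a := be * X / (1 + X) ^ 2). assert (Ha : 0 < a) by (apply Rdiv_lt_0_compat; nra).
  set (A' := X / 2 * a). assert (HA : 0 < A') by (unfold A'; nra).
  destruct (g_bound be 1 Hb' ltac:(lra)) as [M1 HM1].
  assert (T1 := tailbound0 (g be 1) M1 (cont_g be 1 ltac:(lra)) HM1).
  assert (HM10 : 0 <= M1) by (pose proof (T1 0 ltac:(lra)); pose proof (Rabs_pos (RInt (g be 1) 0 0)); lra).
  set (B := 2 * M1).
  set (L := Rmax (Rmax L0 1) (B * exp (2 * c0) / (A' * r)) + 1).
  assert (HL1 : Rmax L0 1 < L) by (unfold L; pose proof (Rmax_l (Rmax L0 1) (B * exp (2 * c0) / (A' * r))); lra).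
  assert (HL2 : B * exp (2 * c0) / (A' * r) < L) by (unfold L; pose proof (Rmax_r (Rmax L0 1) (B * exp (2 * c0) / (A' * r))); lra).
  pose proof (Rmax_l L0 1). pose proof (Rmax_r L0 1).
  exists L. split. lra. split. lra.
  assert (Hg := cont_g be L ltac:(lra)).
  set (eL := exp (- (2 * L * p1))). assert (HeL : 0 < eL) by apply exp_pos.
  set (k := exp (- (2 * (L - 1) * c0))).
  assert (Hk : k = eL * exp (2 * c0) * exp (- (2 * L * r))).
  { unfold k, eL, r. rewrite <- !exp_plus. f_equal. ring. }
  assert (Hkey : k * B <= A' / 2 * eL).
  { rewrite Hk. pose proof (exp_ineq1_le (2 * L * r)). pose proof (exp_pos (2 * L * r)).
    assert (Hr : 0 < r) by (unfold r; lra).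
    assert (B * exp (2 * c0) <= A' * r * L).
    { apply Rmult_le_reg_r with (/ (A' * r)). apply Rinv_0_lt_compat; nra.
      replace (A' * r * L * / (A' * r)) with L by (field; lra). unfold Rdiv in HL2. lra. }
    assert (B * exp (2 * c0) <= A' / 2 * exp (2 * L * r)) by nra.
    rewrite exp_Ropp. 
    replace (eL * exp (2 * c0) * / exp (2 * L * r) * B) with (eL * (B * exp (2 * c0)) / exp (2 * L * r)) by (field; lra).
    apply Rmult_le_reg_r with (exp (2 * L * r)). lra.
    replace (eL * (B * exp (2 * c0)) / exp (2 * L * r) * exp (2 * L * r)) with (eL * (B * exp (2 * c0))) by (field; lra).
    nra. }
  apply Rle_lt_trans with (- (A' / 2 * eL)). 2: nra.
  apply lim_le with (u := fun c => RInt (g be L) 0 c) (B := X). apply G_lim; auto; lra.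
  intros c Hc. rewrite (split3 _ 0 (X / 2) c); auto; try lra. rewrite (split3 _ (X / 2) X c); auto; try lra.
  assert (H1 : RInt (g be L) 0 (X / 2) <= (X / 2 - 0) * (- a * eL)).
  { apply RInt_ub; auto; try lra. intros x Hx. rewrite g_eq. unfold u. rewrite w_x0 by lra. fold X.
    assert (HE : eL <= exp (- (2 * L * rpow x be))).
    { unfold eL. apply exp_le. assert (rpow x be <= p1) by (apply rpow_le; lra). nra. }
    assert (H4 : a <= - (2 * be * (x - X) / (1 + x) ^ 2)).
    { unfold a, Rdiv. assert (Hx1 : 0 < (1+x)^2) by nra. assert (Hx2 : (1+x)^2 <= (1+X)^2) by nra.
      assert (/ (1+X)^2 <= / (1+x)^2) by (apply Rinv_le_contravar; auto).
      assert (0 < / (1+X)^2) by (apply Rinv_0_lt_compat; nra).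
      assert (Hq1 : be * X <= 2 * be * (X - x)) by nra.
      assert (0 <= be * X) by nra.
      assert (be * X * / (1 + X) ^ 2 <= be * X * / (1 + x) ^ 2) by (apply Rmult_le_compat_l; lra).
      assert (be * X * / (1 + x) ^ 2 <= 2 * be * (X - x) * / (1 + x) ^ 2) by (apply Rmult_le_compat_r; lra).
      replace (- (2 * be * (x - X) * / (1 + x) ^ 2)) with (2 * be * (X - x) * / (1 + x) ^ 2) by ring.
      lra. }
    nra. }
  assert (H2 : RInt (g be L) (X / 2) X <= (X - X / 2) * 0).
  { apply RInt_ub; auto; try lra. intros x Hx. rewrite g_eq. unfold u. rewrite w_x0 by lra. fold X.
    pose proof (E_bounds L x be ltac:(lra)).
    assert (2 * be * (x - X) / (1 + x) ^ 2 <= 0).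
    { unfold Rdiv. assert (0 < / (1+x)^2) by (apply Rinv_0_lt_compat; nra).
      assert (2 * be * (x - X) <= 0) by nra. nra. }
    nra. }
  assert (H3 : RInt (g be L) X c <= k * B).
  { assert (Hs : RInt (fun x => k * g be 1 x) X c = k * RInt (g be 1) X c).
    { exact (@RInt_scal R_CompleteNormedModule (g be 1) X c k (exR _ X c (cont_g be 1 ltac:(lra)) ltac:(lra) ltac:(lra))). }
    assert (Hle : RInt (g be L) X c <= RInt (fun x => k * g be 1 x) X c).
    { apply RInt_le. lra. apply exR; auto; lra.
      apply (ex_RInt_scal (g be 1)). apply exR; try lra. apply cont_g; lra.
      intros x Hx. rewrite !g_eq. unfold u. rewrite w_x0 by lra. fold X.
      assert (0 <= 2 * be * (x - X) / (1 + x) ^ 2) by (apply Rdiv_le_0_compat; nra).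
      assert (HP : c0 <= rpow x be) by (apply rpow_le; lra).
      replace (exp (- (2 * L * rpow x be))) with (exp (- (2 * (L - 1) * rpow x be)) * exp (- (2 * 1 * rpow x be)))
        by (rewrite <- exp_plus; f_equal; ring).
      assert (exp (- (2 * (L - 1) * rpow x be)) <= k) by (unfold k; apply exp_le; nra).
      pose proof (exp_pos (- (2 * 1 * rpow x be))). pose proof (exp_pos (- (2 * (L - 1) * rpow x be))).
      assert (0 <= exp (- (2 * 1 * rpow x be)) * (2 * be * (x - X) / (1 + x) ^ 2)) by nra.
      nra. }
    assert (HI1 : 0 <= RInt (g be 1) X c).
    { replace 0 with ((c - X) * 0) by ring. apply RInt_lb; try lra. apply cont_g; lra.
      intros x Hx. rewrite g_eq. unfold u. rewrite w_x0 by lra. fold X.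
      pose proof (E_bounds 1 x be ltac:(lra)). apply Rmult_le_pos. lra. apply Rdiv_le_0_compat; nra. }
    assert (HI2 : RInt (g be 1) X c <= B).
    { pose proof (T1 c ltac:(lra)) as Tc. pose proof (T1 X ltac:(lra)) as TX.
      rewrite (split3 (g be 1) 0 X c) in Tc by (try apply cont_g; lra).
      revert Tc TX. unfold B, Rabs. destruct (Rcase_abs _); destruct (Rcase_abs _); intros; lra. }
    assert (0 < k) by (unfold k; apply exp_pos).
    rewrite Hs in Hle. nra. }
  unfold A' in *. nra.
Qed.


Theorem lemma4 (alpha : R) (Halpha : 2 < alpha) :
  (alpha <= 4 -> forall L : R, 0 < L -> ~ solves alpha L) /\
  (4 < alpha -> exists! L : R, 0 < L /\ solves alpha L).
Proof.
  assert (Hb : 0 < 2 / alpha < 1). { split. apply Rdiv_lt_0_compat; lra.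
    apply Rmult_lt_reg_r with alpha. lra. unfold Rdiv. rewrite Rmult_assoc, Rinv_l; lra. }
  split.
  - intros H4 L HL Hs. apply (solves_iff alpha L Halpha HL) in Hs.
    assert (1/2 <= 2 / alpha).
    { apply Rmult_le_reg_r with alpha. lra. replace (2 / alpha * alpha) with 2 by (field; lra). lra. }
    pose proof (G_pos (2 / alpha) L ltac:(lra) HL). lra.
  - intros H4. assert (Hb2 : 0 < 2 / alpha < 1/2).
    { split. lra. apply Rmult_lt_reg_r with alpha. lra. replace (2 / alpha * alpha) with 2 by (field; lra). lra. }
    set (be := 2 / alpha) in *.
    destruct (G_small be Hb2) as [La [HLa HGa]].
    destruct (G_large be La Hb2) as [Lb [HLab [HLb1 HGb]]].
    destruct (Ranalysis5.IVT_interv (fun L => - G be L) La Lb) as [z [Hz Hz0]].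
    { intros x Hx. apply G_contpt with La; auto; lra. }
    lra. lra. lra.
    assert (Gz : G be z = 0) by lra.
    exists z. split. split. lra. apply (solves_iff alpha z Halpha ltac:(lra)). exact Gz.
    intros L' [HL' Hs']. apply (solves_iff alpha L' Halpha HL') in Hs'. fold be in Hs'.
    destruct (Rtotal_order z L') as [Hlt|[Heq|Hgt]]; auto.
    + exfalso. apply (G_strict be z L' Hb2 ltac:(lra) Gz Hs').
    + exfalso. apply (G_strict be L' z Hb2 ltac:(lra) Hs' Gz).
Qed.
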